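(* Let $D$ be a tournament missing disjoint paths of length 2, and let $C=a_1b_1c_1,\dots,a_kb_kc_k$ be a double cycle in $\Delta(D)$. Then there exists $s\in\{1,\dots,k\}$ such that $|N^+_{D[K(C)]}(a_s)|\le|N^{++}_{D[K(C)]}(a_s)|$ or $|N^+_{D[K(C)]}(c_s)|\le|N^{++}_{D[K(C)]}(c_s)|$.
   Context: All digraphs are finite oriented graphs; $D[X]$ is the subdigraph induced by $X$. $N^+_H(v)$ is the out-neighborhood in $H$; $N^{++}_H(v)$ is the set of vertices $w\notin N_H^+(v)\cup\{v\}$ with $u\to w$ in $H$ for some $u\in N_H^+(v)$. A missing edge is a pair of distinct non-adjacent vertices; the missing graph is formed by the missing edges. $D$ is a tournament missing disjoint paths of length 2 if its missing graph is a vertex-disjoint union of paths each with exactly two edges. For missing edges $\{x,y\},\{a,b\}$, $\{x,y\}$ loses to $\{a,b\}$ (written $xy\to ab$) if the endpoints can be labelled so that $x\to a$, $b\notin N^+(x)\cup N^{++}(x)$, $y\to b$, $a\notin N^+(y)\cup N^{++}(y)$ (neighborhoods in $D$). $\Delta(D)$ has the missing edges as vertices and arcs $(e,e')$ whenever $e$ loses to $e'$. For missing paths $abc$, $xyz$ (edges $ab,bc$ and $xy,yz$), $abc\to xyz$ means each of $ab,bc$ loses to each of $xy,yz$. A double cycle is a sequence $C=a_1b_1c_1,\dots,a_kb_kc_k$ ($k\ge2$) of distinct missing paths of length 2 (components of the missing graph) with $a_ib_ic_i\to a_{i+1}b_{i+1}c_{i+1}$ for all $i$, indices modulo $k$. $K(C)=\{a_i,b_i,c_i: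 1\le i\le k\}$. *)

(* Defs.v *)
From mathcomp Require Import all_boot.
Set Implicit Arguments. Unset Strict Implicit. Unset Printing Implicit Defensive.

Section Defs.
Variables (V : finType) (adj : rel V).
(* adj x y  means the arc x -> y of the digraph D on vertex set V. *)

Definition oriented : Prop :=
  (forall x, ~~ adj x x) /\ (forall x y, adj x y -> ~~ adj y x).

Definition missing (x y : V) : bool := [&& x != y, ~~ adj x y & ~~ adj y x].

(* a-b-c is a whole component of the missing graph which is a path with
   exactly two edges ab, bc. *)
Definition missing_P3 (a b c : V) : Prop :=
  [/\ missing a b, missing b c, a != c, ~~ missing a c &
      forall v, (missing a v -> v = b) /\ (missing c v -> v = b) /\
                (missing b v -> v = a \/ v = c)].

Definition tournament_missing_disjoint_P2 : Prop :=
  oriented /\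
  forall x y, missing x y -> exists a b c, missing_P3 a b c /\
     [\/ (x, y) = (a, b), (x, y) = (b, a), (x, y) = (b, c) | (x, y) = (c, b)].

(* Out-neighbourhood and second out-neighbourhood of v in the induced
   subdigraph D[S]. *)
Definition outN (S : {set V}) (v : V) : {set V} := [set w in S | adj v w].
Definition out2N (S : {set V}) (v : V) : {set V} :=
  [set w in S | [&& w \notin outN S v, w != v & [exists u in outN S v, adj u w]]].

(* labelled version of "x y loses to a b" (neighbourhoods in D itself) *)
Definition loses_lab (x y a b : V) : bool :=
  [&& adj x a, b \notin outN setT x :|: out2N setT x, adj y b &
      a \notin outN setT y :|: out2N setT y].

Definition loses (x y a b : V) : bool :=
  [|| loses_lab x y a b, loses_lab y x a b, loses_lab x y b a | loses_lab y x b a].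

Definition path_loses (a b c x y z : V) : bool :=
  [&& loses a b x y, loses a b y z, loses b c x y & loses b c y z].

(* C = a_0 b_0 c_0, ..., a_{k-1} b_{k-1} c_{k-1} is a double cycle
   (0-based indices, taken modulo k). *)
Definition double_cycle (k : nat) (a b c : nat -> V) : Prop :=
  [/\ 2 <= k,
      (forall i, i < k -> missing_P3 (a i) (b i) (c i)),
      (forall i j, i < k -> j < k -> i != j ->
         [set a i; b i; c i] != [set a j; b j; c j]) &
      (forall i, i < k -> path_loses (a i) (b i) (c i)
                    (a (i.+1 %% k)) (b (i.+1 %% k)) (c (i.+1 %% k)))].

Definition KC (k : nat) (a b c : nat -> V) : {set V} :=
  [set v | [exists i : 'I_k, [|| v == a i, v == b i | v == c i]]].

End Defs.

(* Main.v *)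
Require Import Defs.
From mathcomp Require Import all_boot.
From mathcomp Require Import zify.
Set Implicit Arguments. Unset Strict Implicit. Unset Printing Implicit Defensive.

Section Local.
Variables (V : finType) (adj : rel V).
Hypothesis Hor : oriented adj.

Lemma adj_irr x : ~~ adj x x. Proof. by case: Hor. Qed.
Lemma adj_asym x y : adj x y -> ~~ adj y x. Proof. by case: Hor => _; apply. Qed.
Lemma adj_neq x y : adj x y -> x != y.
Proof. by move=> h; apply/eqP=> e; subst; rewrite (negbTE (adj_irr y)) in h. Qed.

Definition dom x q := ~~ adj x q /\ (forall u, adj x u -> ~~ adj u q).
Definition lab e1 e2 f1 f2 := [/\ adj e1 f1, adj e2 f2, dom e1 f2 & dom e2 f1].

Lemma notin_N12 x q : x != q ->
  q \notin outN adj setT x :|: out2N adj setT x -> dom x q.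
Proof.
move=> nxq; rewrite in_setU negb_or => /andP[h1 h2].
have h1' : ~~ adj x q by move: h1; rewrite !inE.
split=> // u xu; apply/negP => uq; move: h2; rewrite !inE h1' /= eq_sym nxq /=.
by move/negP; apply; apply/existsP; exists u; rewrite !inE xu.
Qed.

Lemma ll_lab x y p q : x != q -> y != p -> loses_lab adj x y p q -> lab x y p q.
Proof.
move=> h1 h2 /and4P[xp nq yq np]; split => //; exact: notin_N12.
Qed.

Lemma loses_lab2 e1 e2 f1 f2 : e1 != f1 -> e1 != f2 -> e2 != f1 -> e2 != f2 ->
  loses adj e1 e2 f1 f2 -> lab e1 e2 f1 f2 \/ lab e1 e2 f2 f1.
Proof.
move=> d11 d12 d21 d22 /or4P[] h.
- by left; apply: ll_lab.
- by right; have [? ? ? ?] := ll_lab d22 d11 h; split.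
- by right; apply: ll_lab.
- by left; have [? ? ? ?] := ll_lab d21 d12 h; split.
Qed.

Definition cr u v := adj u v || adj v u.

Lemma cr_neq u v : cr u v -> u != v.
Proof. by case/orP => /adj_neq //; rewrite eq_sym. Qed.

Lemma cr_nadj u v : cr u v -> ~~ adj u v -> adj v u.
Proof. by case/orP => ->. Qed.

Definition T2 a b c x y z :=
  [/\ [/\ adj a x, adj a z, adj c x & adj c z], adj b y &
      [/\ dom a y, dom c y, dom b x & dom b z]].
Definition T1 a b c x y z :=
  [/\ [/\ adj a y, adj c y, adj b x & adj b z],
      [/\ dom a x, dom a z, dom c x & dom c z] & dom b y].

Lemma consec a b c x y z :
  cr a x -> cr a y -> cr a z -> cr b x -> cr b y -> cr b z ->
  cr c x -> cr c y -> cr c z ->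
  path_loses adj a b c x y z -> T2 a b c x y z \/ T1 a b c x y z.
Proof.
move=> ax ay az bx by_ bz cx cy cz /and4P[l1 l2 l3 l4].
have n := cr_neq.
have [h1|h1] := loses_lab2 (n _ _ ax) (n _ _ ay) (n _ _ bx) (n _ _ by_) l1;
have [h2|h2] := loses_lab2 (n _ _ ay) (n _ _ az) (n _ _ by_) (n _ _ bz) l2;
have [h3|h3] := loses_lab2 (n _ _ bx) (n _ _ by_) (n _ _ cx) (n _ _ cy) l3;
have [h4|h4] := loses_lab2 (n _ _ by_) (n _ _ bz) (n _ _ cy) (n _ _ cz) l4;
case: h1 => [? ? ? ?]; case: h2 => [? ? ? ?];
case: h3 => [? ? ? ?]; case: h4 => [? ? ? ?];
  try (match goal with H : is_true (adj ?u ?v), H' : dom ?u ?v |- _ =>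
          by case: H' => hh _; rewrite H in hh end);
  try (match goal with H : is_true (adj ?u ?v), H' : is_true (adj ?v ?u) |- _ =>
          by rewrite (negbTE (adj_asym H)) in H' end);
  try (match goal with H : dom ?u ?v, H' : dom ?v ?u, C : cr ?u ?v |- _ =>
          by case: H => /negbTE h _; case: H' => /negbTE h' _; rewrite /cr h h' in C end);
  try (match goal with H : dom ?u ?v, H' : dom ?v ?u, C : cr ?v ?u |- _ =>
          by case: H => /negbTE h _; case: H' => /negbTE h' _; rewrite /cr h h' in C end).
all: first [ by left; split; [split| |split] | by right; split; [split|split|] ].
Qed.
End Local.
Section Local2.
Variables (V : finType) (adj : rel V).

Lemma missingC x y : missing adj x y = missing adj y x.
Proof. by rewrite /missing eq_sym; case: (adj x y); case: (adj y x). Qed.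

Lemma P3_closed a b c u v : missing_P3 adj a b c -> u \in [set a; b; c] ->
  missing adj u v -> v \in [set a; b; c].
Proof.
case=> _ _ _ _ H; rewrite !inE -orbA => /or3P[] /eqP -> m.
- by have [h _] := H v; rewrite (h m) eqxx orbT.
- by have [_ [_ h]] := H v; case: (h m) => ->; rewrite eqxx ?orbT.
- by have [_ [h _]] := H v; rewrite (h m) eqxx orbT.
Qed.

Lemma P3_reach a b c w v : missing_P3 adj a b c -> w \in [set a; b; c] ->
  v \in [set a; b; c] ->
  [\/ v = w, missing adj w v | missing adj w b /\ missing adj b v].
Proof.
case=> mab mbc _ _ _; rewrite !inE -!orbA => /or3P[] /eqP -> /or3P[] /eqP ->;
  rewrite ?(missingC b a) ?(missingC c b);
  by [constructor 1 | constructor 2 | constructor 3].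
Qed.

Lemma P3_same a b c a' b' c' w : missing_P3 adj a b c -> missing_P3 adj a' b' c' ->
  w \in [set a; b; c] -> w \in [set a'; b'; c'] ->
  [set a; b; c] = [set a'; b'; c'].
Proof.
have sub : forall a b c a' b' c' w, missing_P3 adj a b c -> missing_P3 adj a' b' c' ->
  w \in [set a; b; c] -> w \in [set a'; b'; c'] ->
  [set a'; b'; c'] \subset [set a; b; c].
  move=> {}a {}b {}c {}a' {}b' {}c' {}w H H' wS wS'; apply/subsetP => v vS'.
  have bS' : b' \in [set a'; b'; c'] by rewrite !inE eqxx orbT.
  case: (P3_reach H' wS' vS') => [->|m|[m1 m2]] //.
  - exact: P3_closed H wS m.
  - exact: P3_closed H (P3_closed H wS m1) m2.
move=> H H' wS wS'; apply/eqP; rewrite eqEsubset.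
by rewrite (sub _ _ _ _ _ _ w) // (sub _ _ _ _ _ _ w).
Qed.

End Local2.
Lemma mod2k m k : m < k + k -> m %% k = if m < k then m else m - k.
Proof.
case: ifP => h1 h2; first by rewrite modn_small.
have -> : m = (m - k) + k by lia.
by rewrite modnDr modn_small; lia.
Qed.

Lemma modS m k : (m %% k).+1 %% k = m.+1 %% k.
Proof. by rewrite -addn1 modnDml addn1. Qed.

Lemma card_bigcup_leq (T : finType) (S : nat -> {set T}) n :
  #|\bigcup_(j < n) S j| <= \sum_(j < n) #|S j|.
Proof.
elim: n => [|n IH]; first by rewrite !big_ord0 cards0.
rewrite !big_ord_recr /=; apply: leq_trans (leq_card_setU _ _) _.
by rewrite leq_add2r.
Qed.
Lemma card_bigcup_disj (T : finType) (S : nat -> {set T}) n :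
  (forall i j, i < n -> j < n -> i != j -> [disjoint S i & S j]) ->
  #|\bigcup_(j < n) S j| = \sum_(j < n) #|S j|.
Proof.
elim: n => [|n IH] H; first by rewrite !big_ord0 cards0.
rewrite !big_ord_recr /= cardsU IH; last by move=> i j hi hj; apply: H; lia.
suff -> : (\bigcup_(j < n) S j) :&: S n = set0 by rewrite cards0 subn0.
apply/setP => v; rewrite !inE; apply/negP => /andP[/bigcupP[j _ vj] vn].
have := H j n (ltnW (ltn_ord j)) (ltnSn n) (negbT (ltn_eqF (ltn_ord j))).
by move/disjointFr/(_ vj); rewrite vn.
Qed.

Lemma inOut (V : finType) (adj : rel V) (S : {set V}) v w :
  w \in S -> adj v w -> w \in outN adj S v.
Proof. by rewrite /outN inE => -> ->. Qed.

Lemma sum_neq3 k (i : 'I_k) : \sum_(j < k | j != i) 3 = 3 * k.-1.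
Proof.
have h : \sum_(j < k) 3 = 3 + \sum_(j < k | j != i) 3 by rewrite (bigD1 i).
rewrite sum_nat_const card_ord in h.
have k0 : 0 < k by move: (ltn_ord i); lia.
lia.
Qed.

Lemma inSep (V : finType) (S : {set V}) (p : pred V) w :
  (w \in [set x in S | p x]) = (w \in S) && p w.
Proof. by rewrite inE. Qed.

Lemma outNP (V : finType) (adj : rel V) (S : {set V}) v w :
  (w \in outN adj S v) = (w \in S) && adj v w.
Proof. by rewrite /outN inE. Qed.

Section Global.
Variables (V : finType) (adj : rel V).
Hypothesis Hor : oriented adj.
Variables (k : nat) (a b c : nat -> V).
Hypothesis Hk : 1 < k.
Hypothesis HP3 : forall i, i < k -> missing_P3 adj (a i) (b i) (c i).
Hypothesis Hdist : forall i j, i < k -> j < k -> i != j ->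
  [set a i; b i; c i] != [set a j; b j; c j].
Hypothesis Hcyc : forall i, i < k -> path_loses adj (a i) (b i) (c i)
  (a (i.+1 %% k)) (b (i.+1 %% k)) (c (i.+1 %% k)).

Definition P i := [set a i; b i; c i].
Definition nx i := i.+1 %% k.

Lemma nx_lt i : nx i < k.
Proof. by rewrite /nx ltn_mod; lia. Qed.

Lemma nx_neq i : i < k -> nx i != i.
Proof. move=> h; rewrite /nx mod2k; last lia. case: ifP => h'; lia. Qed.

Lemma aP i : a i \in P i. Proof. by rewrite !inE eqxx. Qed.
Lemma bP i : b i \in P i. Proof. by rewrite !inE eqxx orbT. Qed.
Lemma cP i : c i \in P i. Proof. by rewrite !inE eqxx !orbT. Qed.

Lemma P_disj i j u : i < k -> j < k -> i != j -> u \in P i -> u \notin P j.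
Proof.
move=> hi hj nij ui; apply/negP => uj.
by move: (Hdist hi hj nij); rewrite (P3_same (HP3 hi) (HP3 hj) ui uj) eqxx.
Qed.

Lemma P_cr i j u v : i < k -> j < k -> i != j -> u \in P i -> v \in P j -> cr adj u v.
Proof.
move=> hi hj nij ui vj.
have nuv : u != v by apply/eqP => e; subst; move: (P_disj hi hj nij ui); rewrite vj.
have nm : ~~ missing adj u v.
  apply/negP => m; move: (P_disj hi hj nij (P3_closed (HP3 hi) ui m)); by rewrite vj.
by move: nm; rewrite /missing nuv /cr; case: (adj u v); case: (adj v u).
Qed.

Lemma consec_i i : i < k ->
  T2 adj (a i) (b i) (c i) (a (nx i)) (b (nx i)) (c (nx i)) \/
  T1 adj (a i) (b i) (c i) (a (nx i)) (b (nx i)) (c (nx i)).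
Proof.
move=> hi; have hn := nx_lt i; have nn : i != nx i by rewrite eq_sym nx_neq.
apply: consec => //; try exact: (Hcyc hi);
  apply: (P_cr hi hn nn); by rewrite ?aP ?bP ?cP.
Qed.


Definition CBp u i := (adj (a i) u == adj (c i) u) && (adj (b i) u == ~~ adj (a i) u).
Definition pc u i := ((adj (a i) u) || (adj (c i) u)) + adj (b i) u.

Lemma prop_dom e f u : dom adj e f -> cr adj u f -> adj e u -> adj f u.
Proof. by case=> _ h cu eu; apply: cr_nadj cu (h u eu). Qed.

Lemma step i u j : i < k -> j < k -> j != nx i -> u \in P j ->
  pc u i <= pc u (nx i) /\ (pc u i = 1 -> pc u (nx i) = 1 -> CBp u (nx i)).
Proof.
move=> hi hj nj uj; have hn := nx_lt i.
have cx : cr adj u (a (nx i)) by apply: (P_cr hj hn nj uj); rewrite aP.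
have cy : cr adj u (b (nx i)) by apply: (P_cr hj hn nj uj); rewrite bP.
have cz : cr adj u (c (nx i)) by apply: (P_cr hj hn nj uj); rewrite cP.
have pd e f : dom adj e f -> cr adj u f -> adj e u ==> adj f u.
  by move=> d cf; apply/implyP; apply: prop_dom d cf.
case: (consec_i hi) => [[_ _ [d1 d2 d3 d4]]|[_ [d1 d2 d3 d4] d5]].
- have h1 := pd _ _ d1 cy; have h2 := pd _ _ d2 cy;
  have h3 := pd _ _ d3 cx; have h4 := pd _ _ d4 cz.
  move: h1 h2 h3 h4; rewrite /pc /CBp.
  by move: (adj (a i) u) (adj (b i) u) (adj (c i) u) (adj (a (nx i)) u)
    (adj (b (nx i)) u) (adj (c (nx i)) u) => [] [] [] [] [] [].
- have h1 := pd _ _ d1 cx; have h2 := pd _ _ d2 cz;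
  have h3 := pd _ _ d3 cx; have h4 := pd _ _ d4 cz; have h5 := pd _ _ d5 cy.
  move: h1 h2 h3 h4 h5; rewrite /pc /CBp.
  by move: (adj (a i) u) (adj (b i) u) (adj (c i) u) (adj (a (nx i)) u)
    (adj (b (nx i)) u) (adj (c (nx i)) u) => [] [] [] [] [] [].
Qed.

Lemma dom_rev e f : dom adj e f -> cr adj e f -> adj f e.
Proof. by case=> h _ cf; apply: cr_nadj cf h. Qed.

Lemma inP3 u i : u \in P i -> [\/ u = a i, u = b i | u = c i].
Proof. by rewrite !inE -orbA => /or3P[] /eqP ->; constructor. Qed.

Lemma cr_i i (hi : i < k) u v : u \in P i -> v \in P (nx i) -> cr adj u v.
Proof. apply: P_cr => //; [exact: nx_lt | by rewrite eq_sym nx_neq]. Qed.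

Lemma CB_both i : i < k ->
  (forall u, u \in P i -> CBp u (nx i)) /\ (forall u, u \in P (nx i) -> CBp u i).
Proof.
move=> hi; have cr' := cr_i hi.
case: (consec_i hi) => [[[h1 h2 h3 h4] h5 [d1 d2 d3 d4]]|[[h1 h2 h3 h4] [d1 d2 d3 d4] d5]].
- have e1 := dom_rev d1 (cr' _ _ (aP _) (bP _)); have e2 := dom_rev d2 (cr' _ _ (cP _) (bP _)).
  have e3 := dom_rev d3 (cr' _ _ (bP _) (aP _)); have e4 := dom_rev d4 (cr' _ _ (bP _) (cP _)).
  have f1 := negbTE (adj_asym Hor h1); have f2 := negbTE (adj_asym Hor h2).
  have f3 := negbTE (adj_asym Hor h3); have f4 := negbTE (adj_asym Hor h4).
  have f5 := negbTE (adj_asym Hor h5); have g1 := negbTE (adj_asym Hor e1).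
  have g2 := negbTE (adj_asym Hor e2); have g3 := negbTE (adj_asym Hor e3).
  have g4 := negbTE (adj_asym Hor e4).
  by split=> u /inP3[] ->; rewrite /CBp ?h1 ?h2 ?h3 ?h4 ?h5 ?e1 ?e2 ?e3 ?e4
     ?f1 ?f2 ?f3 ?f4 ?f5 ?g1 ?g2 ?g3 ?g4.
- have e1 := dom_rev d1 (cr' _ _ (aP _) (aP _)); have e2 := dom_rev d2 (cr' _ _ (aP _) (cP _)).
  have e3 := dom_rev d3 (cr' _ _ (cP _) (aP _)); have e4 := dom_rev d4 (cr' _ _ (cP _) (cP _)).
  have e5 := dom_rev d5 (cr' _ _ (bP _) (bP _)).
  have f1 := negbTE (adj_asym Hor h1); have f2 := negbTE (adj_asym Hor h2).
  have f3 := negbTE (adj_asym Hor h3); have f4 := negbTE (adj_asym Hor h4).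
  have g1 := negbTE (adj_asym Hor e1); have g5 := negbTE (adj_asym Hor e5).
  have g2 := negbTE (adj_asym Hor e2); have g3 := negbTE (adj_asym Hor e3).
  have g4 := negbTE (adj_asym Hor e4).
  by split=> u /inP3[] ->; rewrite /CBp ?h1 ?h2 ?h3 ?h4 ?e5 ?e1 ?e2 ?e3 ?e4
     ?f1 ?f2 ?f3 ?f4 ?g5 ?g1 ?g2 ?g3 ?g4.
Qed.

Lemma CB_pc u i : CBp u i -> pc u i = 1.
Proof.
by rewrite /CBp /pc; case: (adj (a i) u); case: (adj (b i) u); case: (adj (c i) u).
Qed.

Lemma CB_all j i u : j < k -> i < k -> i != j -> u \in P j -> CBp u i.
Proof.
move=> hj hi nij uj.
pose idx r := (j + r.+1) %% k.
have idx_lt r : idx r < k by rewrite /idx ltn_mod; lia.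
have idx_nx r : nx (idx r) = idx r.+1 by rewrite /nx /idx modS !addnS.
have idx_neq r : r.+1 < k.-1 -> j != nx (idx r).
  move=> hr; rewrite idx_nx /idx mod2k; last lia. case: ifP => h; lia.
have idx0 : idx 0 = nx j by rewrite /idx /nx addn1.
have idxe : nx (idx k.-2) = j.
  rewrite idx_nx /idx; have -> : j + k.-2.+2 = j + k by lia.
  by rewrite modnDr modn_small.
have mono : forall s r, r <= s -> s < k.-1 -> pc u (idx r) <= pc u (idx s).
  elim=> [|s IH] r; first by rewrite leqn0 => /eqP ->.
  rewrite leq_eqVlt => /orP[/eqP -> //|hr] hs.
  apply: leq_trans (IH r hr _) _; first lia.
  rewrite -idx_nx; exact: (step (idx_lt s) hj (idx_neq s _) uj).1.
have q0 : pc u (idx 0) = 1 by rewrite idx0; apply: CB_pc; exact: (CB_both hj).1 u uj.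
have qe : pc u (idx k.-2) = 1.
  apply: CB_pc; apply: (CB_both (idx_lt _)).2; by rewrite idxe.
have q1 r : r < k.-1 -> pc u (idx r) = 1.
  move=> hr; apply/eqP; rewrite eqn_leq; apply/andP; split.
  - by rewrite -qe; apply: mono; lia.
  - by rewrite -q0; apply: mono; lia.
have cb r : r < k.-1 -> CBp u (idx r).
  case: r => [_|s hs]; first by rewrite idx0; exact: (CB_both hj).1 u uj.
  rewrite -idx_nx; apply: (step (idx_lt s) hj (idx_neq s _) uj).2; try lia.
  - by apply: q1; lia.
  - by rewrite idx_nx; apply: q1.
have hr : (i + k - j.+1) %% k < k.-1.
  rewrite mod2k; last lia. case: ifP => h; lia.
have hi' : idx ((i + k - j.+1) %% k) = i.
  rewrite /idx (@mod2k (i + k - j.+1)); last lia.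
  case: ifP => h; rewrite mod2k; try lia; case: ifP; lia.
by rewrite -hi'; apply: cb.
Qed.

Definition K := KC k a b c.

Lemma K_big : K = \bigcup_(j < k) P j.
Proof.
apply/setP => v; rewrite /K /KC inE; apply/existsP/bigcupP.
- by case=> j h; exists j => //; rewrite /P !inE -orbA.
- by case=> j _ h; exists j; move: h; rewrite /P !inE -orbA.
Qed.

Lemma inK v : v \in K -> exists2 j, j < k & v \in P j.
Proof. by rewrite K_big => /bigcupP[j _ h]; exists j. Qed.

Lemma PK j v : j < k -> v \in P j -> v \in K.
Proof. by move=> hj h; rewrite K_big; apply/bigcupP; exists (Ordinal hj). Qed.

Lemma cardP j : j < k -> #|P j| = 3.
Proof.
move=> hj; case: (HP3 hj) => /and3P[ab _ _] /and3P[bc _ _] ac _ _.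
by rewrite /P -setUA cardsU1 cards2 bc !inE negb_or ab ac.
Qed.

Lemma cardK : #|K| = 3 * k.
Proof.
rewrite K_big card_bigcup_disj.
- rewrite (eq_bigr (fun _ => 3)); last by move=> j _; apply: cardP.
  by rewrite sum_nat_const card_ord mulnC.
- move=> i j hi hj nij; rewrite -setI_eq0; apply/eqP/setP => v; rewrite inE in_set0.
  by apply/negP => /andP[vi vj]; move: (P_disj hi hj nij vi); rewrite vj.
Qed.

Definition e i := if adj (c i) (a i) then a i else c i.
Definition e' i := if adj (c i) (a i) then c i else a i.

Lemma e_cases i : (e i = a i /\ e' i = c i) \/ (e i = c i /\ e' i = a i).
Proof. by rewrite /e /e'; case: (adj (c i) (a i)); [left|right]. Qed.

Lemma eP i : e i \in P i. Proof. by case: (e_cases i) => [[-> _]|[-> _]]; rewrite ?aP ?cP. Qed.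
Lemma e'P i : e' i \in P i. Proof. by case: (e_cases i) => [[_ ->]|[_ ->]]; rewrite ?aP ?cP. Qed.

Lemma inP3e u i : u \in P i -> [\/ u = e i, u = b i | u = e' i].
Proof.
by move=> /inP3 wP; case: (e_cases i) => [[-> ->]|[-> ->]]; case: wP => ->; constructor.
Qed.

Lemma ee' i : i < k -> adj (e' i) (e i).
Proof.
move=> hi; case: (HP3 hi) => _ _ ac nm _.
rewrite /e /e'; case: ifP => // h.
by move: nm; rewrite /missing ac h /= andbT negbK.
Qed.

Lemma eb i : i < k -> ~~ adj (e i) (b i).
Proof.
move=> hi; case: (HP3 hi) => /and3P[_ h1 _] /and3P[_ _ h2] _ _ _.
by case: (e_cases i) => [[-> _]|[-> _]].
Qed.

Lemma CBe u i : CBp u i -> adj (e i) u = adj (e' i) u /\ adj (b i) u = ~~ adj (e i) u.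
Proof.
rewrite /CBp => /andP[/eqP h1 /eqP h2].
by case: (e_cases i) => [[-> ->]|[-> ->]]; rewrite -?h1.
Qed.

Lemma consec_e i : i < k ->
  (adj (e i) (a (nx i)) /\ adj (e i) (c (nx i)) /\ dom adj (b i) (a (nx i))) \/
  [/\ adj (e i) (b (nx i)), dom adj (b i) (b (nx i)), dom adj (e i) (a (nx i)),
      dom adj (e i) (c (nx i)) & adj (a (nx i)) (e' i) /\ adj (c (nx i)) (e' i)].
Proof.
move=> hi; have cr' := cr_i hi.
case: (consec_i hi) => [[[h1 h2 h3 h4] h5 [d1 d2 d3 d4]]|[[h1 h2 h3 h4] [d1 d2 d3 d4] d5]].
- by left; case: (e_cases i) => [[-> _]|[-> _]].
- right; have r1 := dom_rev d1 (cr' _ _ (aP _) (aP _)); have r2 := dom_rev d2 (cr' _ _ (aP _) (cP _)).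
  have r3 := dom_rev d3 (cr' _ _ (cP _) (aP _)); have r4 := dom_rev d4 (cr' _ _ (cP _) (cP _)).
  by case: (e_cases i) => [[-> ->]|[-> ->]].
Qed.

Lemma e_neq_b i : i < k -> e i != b i.
Proof.
move=> hi; case: (HP3 hi) => /and3P[h1 _ _] /and3P[h2 _ _] _ _ _.
by case: (e_cases i) => [[-> _]|[-> _]] //; rewrite eq_sym.
Qed.

Lemma cardU_le (A B : {set V}) : #|A :|: B| <= #|A| + #|B|.
Proof. exact: leq_card_setU. Qed.

Lemma key i : i < k -> (exists2 w, w \in P (nx i) & adj (e i) w /\ dom adj (b i) w) ->
  2 * #|outN adj K (e i)| + 5 <= 3 * k + #|[set w in P (nx i) | adj (e i) w]| ->
  #|outN adj K (e i)| <= #|out2N adj K (e i)|.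
Proof.
move=> hi [w wP [ew dw]] H.
have hn := nx_lt i; have nin : i != nx i by rewrite eq_sym nx_neq.
have wK : w \in K := PK hn wP.
have eK : e i \in K := PK hi (eP i).
set E := e i in H ew eK *.
set X := [set u in K | [&& u \notin P i, u \notin P (nx i) & adj u E]].
set Y := [set u in K | (u \notin P (nx i)) && adj E u].
set Z := [set u in P (nx i) | adj E u] in H *.
have h1 : b i |: X \subset out2N adj K E.
  apply/subsetP => v; rewrite in_setU1 => /orP[/eqP ->|].
  - rewrite inE (PK hi (bP i)) /=; apply/and3P; split.
    + by rewrite inE negb_and (eb hi) orbT.
    + by rewrite eq_sym e_neq_b.
    + apply/existsP; exists w; rewrite inE wK ew /=.
      exact: dom_rev dw (cr_i hi (bP i) wP).
  - rewrite inE => /andP[vK /and3P[vi vn ve]].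
    have [j hj vj] := inK vK.
    have nji : i != j by apply/eqP => E'; subst j; rewrite vj in vi.
    have njn : j != nx i by apply/eqP => E'; subst j; rewrite vj in vn.
    have [_ hb] := CBe (CB_all hj hi nji vj).
    have bv : adj (b i) v by rewrite hb (adj_asym Hor ve).
    have wv : adj w v.
      apply: cr_nadj; first exact: (P_cr hj hn njn vj wP).
      by case: dw => _ /(_ v bv).
    rewrite inE vK /=; apply/and3P; split.
    + by rewrite inE negb_and (adj_asym Hor ve) orbT.
    + by apply/eqP => E'; move: vi; rewrite E' /E eP.
    + by apply/existsP; exists w; rewrite inE wK ew.
have h2 : Y :|: Z \subset outN adj K E.
  apply/subsetP => v; rewrite in_setU => /orP[]; rewrite inE.
  - by case/andP => vK /andP[_ ev]; rewrite inE vK ev.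
  - by case/andP => vn ev; rewrite inE (PK hn vn) ev.
have h2' : Y :&: Z = set0.
  apply/setP => v; rewrite !inE; apply/negP => /andP[/andP[_ /andP[/negP h _]] /andP[h' _]].
  exact: h h'.
have h3 : K \subset X :|: Y :|: P i :|: P (nx i).
  apply/subsetP => v vK; have [j hj vj] := inK vK.
  case: (eqVneq j i) => [E'|nij]; first by subst j; apply/setUP; left; apply/setUP; right.
  case: (eqVneq j (nx i)) => [E'|njn]; first by subst j; apply/setUP; right.
  have vi : v \notin P i by apply: P_disj hj hi nij vj.
  have vn : v \notin P (nx i) by apply: P_disj hj hn njn vj.
  case/orP: (P_cr hj hi nij vj (eP i)) => h.
  - apply/setUP; left; apply/setUP; left; apply/setUP; left.
    by rewrite inE vK vi vn h.
  - apply/setUP; left; apply/setUP; left; apply/setUP; right.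
    by rewrite inE vK vn h.
have bX : b i \notin X by rewrite in_set bP /= andbF.
have c1 := subset_leq_card h1; rewrite cardsU1 bX in c1.
have c2 := subset_leq_card h2; rewrite cardsU h2' cards0 subn0 in c2.
have c3 := subset_leq_card h3.
have c4 : #|X :|: Y :|: P i :|: P (nx i)| <= #|X| + #|Y| + #|P i| + #|P (nx i)|.
  apply: leq_trans (cardU_le _ _) _; rewrite leq_add2r.
  apply: leq_trans (cardU_le _ _) _; rewrite leq_add2r.
  exact: cardU_le.
rewrite cardK in c3; rewrite (cardP hi) (cardP hn) in c4.
lia.
Qed.

Lemma strict i : i < k -> dom adj (e i) (a (nx i)) -> dom adj (e i) (c (nx i)) ->
  adj (e i) (b (nx i)) -> adj (a (nx i)) (e' i) -> adj (c (nx i)) (e' i) ->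
  #|outN adj K (e i)| < #|outN adj K (e (nx i))|.
Proof.
move=> hi d1 d2 eb' f1 f2; have hn := nx_lt i.
have [df [fe' mf]] : dom adj (e i) (e (nx i)) /\ adj (e (nx i)) (e' i) /\
    (forall v, missing adj (e (nx i)) v -> v = b (nx i)).
  case: (HP3 hn) => _ _ _ _ Hm.
  case: (e_cases (nx i)) => [[-> _]|[-> _]]; split => //; split => // v;
    by case: (Hm v) => [? [? ?]].
have fe : adj (e (nx i)) (e i) := dom_rev df (cr_i hi (eP i) (eP (nx i))).
set f := e (nx i) in df fe' mf fe *.
set S1 := outN adj K (e i) :\ b (nx i).
set S2 := [set e i; e' i].
have hsub : S1 :|: S2 \subset outN adj K f.
  apply/subsetP => v /setUP[].
  - rewrite !inE => /andP[vb /andP[vK ev]]; rewrite vK /=.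
    have nvf : v != f.
      by apply/eqP => E'; move: ev; rewrite E'; case: df => /negbTE ->.
    have nm : ~~ missing adj f v by apply/negP => /mf /eqP; rewrite (negbTE vb).
    move: nm; rewrite /missing eq_sym nvf /= negb_and !negbK => /orP[] // h.
    by case: df => _ /(_ v ev); rewrite h.
  - by case/set2P => ->; apply: inOut => //; apply: PK hi _; rewrite ?eP ?e'P.
have hdis : S1 :&: S2 = set0.
  apply/setP => v; rewrite !inE; apply/negP => /andP[/andP[_ /andP[_ ev]] /orP[] /eqP E'];
    move: ev; rewrite E'.
  - by rewrite (negbTE (adj_irr Hor _)).
  - by rewrite (negbTE (adj_asym Hor (ee' hi))).
have c1 := subset_leq_card hsub; rewrite cardsU hdis cards0 subn0 in c1.
have c2 : #|outN adj K (e i)| = 1 + #|S1|.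
  by rewrite (cardsD1 (b (nx i))) inE (PK hn (bP _)) eb'.
have c3 : #|S2| = 2 by rewrite cards2 eq_sym (adj_neq Hor (ee' hi)).
lia.
Qed.

Definition G i j := #|[set w in P j | adj (e i) w]|.

Lemma d_le i : #|outN adj K (e i)| <= \sum_(j < k) G i j.
Proof.
apply: leq_trans (card_bigcup_leq (fun j => [set w in P j | adj (e i) w]) k).
apply: subset_leq_card; apply/subsetP => v; rewrite outNP => /andP[vK ev].
have [j hj vj] := inK vK.
by apply/bigcupP; exists (Ordinal hj) => //; rewrite inSep vj ev.
Qed.

Lemma G_diag i : i < k -> G i i = 0.
Proof.
move=> hi; apply/eqP; rewrite cards_eq0; apply/eqP/setP => w.
rewrite inSep in_set0; apply/negP => /andP[wP ew].
have h1 := adj_irr Hor (e i); have h2 := eb hi; have h3 := adj_asym Hor (ee' hi).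
by case: (inP3e wP) => E'; subst w; [rewrite (negbTE h1) in ew | rewrite (negbTE h2) in ew
    | rewrite (negbTE h3) in ew].
Qed.

Lemma G_aux i j : i < k -> j < k -> i != j -> adj (e i) (e j) -> G i j <= 2 /\ G j i <= 1.
Proof.
move=> hi hj nij h; have nji : j != i by rewrite eq_sym.
split.
- have [_ hb] := CBe (CB_all hi hj nji (eP i)).
  have bj : adj (b j) (e i) by rewrite hb (adj_asym Hor h).
  rewrite /G; apply: leq_trans (_ : #|[set e j; e' j]| <= 2); last by rewrite cards2; case: (_ != _).
  apply: subset_leq_card; apply/subsetP => w; rewrite inSep => /andP[wP ew].
  case: (inP3e wP) => E'; subst w; rewrite ?in_set2 ?eqxx ?orbT //.
  by rewrite (negbTE (adj_asym Hor bj)) in ew.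
- have [he _] := CBe (CB_all hj hi nij (eP j)).
  have e'j : adj (e' i) (e j) by rewrite -he.
  rewrite /G; apply: leq_trans (_ : #|[set b i]| <= 1); last by rewrite cards1.
  apply: subset_leq_card; apply/subsetP => w; rewrite inSep => /andP[wP ew].
  case: (inP3e wP) => E'; subst w; rewrite ?in_set1 ?eqxx //.
  + by rewrite (negbTE (adj_asym Hor h)) in ew.
  + by rewrite (negbTE (adj_asym Hor e'j)) in ew.
Qed.

Lemma G_pair i j : i < k -> j < k -> i != j -> G i j + G j i <= 3.
Proof.
move=> hi hj nij; case/orP: (P_cr hi hj nij (eP i) (eP j)) => h.
- by have [h1 h2] := G_aux hi hj nij h; lia.
- by have [h1 h2] := G_aux hj hi (negbT (introF eqP (fun E => negP nij (introT eqP (esym E))))) h; lia.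
Qed.

Lemma sumG : 2 * (\sum_(i < k) \sum_(j < k) G i j) <= 3 * (k * k.-1).
Proof.
have E : \sum_(i < k) \sum_(j < k) G i j = \sum_(i < k) \sum_(j < k) G j i.
  by rewrite exchange_big.
have -> : 2 * (\sum_(i < k) \sum_(j < k) G i j) =
    \sum_(i < k) \sum_(j < k) (G i j + G j i).
  by rewrite mul2n -addnn {2}E -big_split /=; apply: eq_bigr => i _; rewrite big_split.
apply: (@leq_trans (\sum_(i < k) (3 * k.-1))); last first.
  by rewrite sum_nat_const card_ord mulnCA mulnC.
apply: leq_sum => i _.
rewrite (bigD1 i) //= G_diag // add0n -(sum_neq3 i).
by apply: leq_sum => j nj; apply: G_pair => //; rewrite eq_sym.
Qed.

Lemma main_glob : exists2 s, s < k &
  (#|outN adj K (a s)| <= #|out2N adj K (a s)|) \/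
  (#|outN adj K (c s)| <= #|out2N adj K (c s)|).
Proof.
have k0 : 0 < k by lia.
pose d i := #|outN adj K (e i)|.
pose i0 := Ordinal k0.
case: (@arg_minnP _ i0 predT (fun i : 'I_k => d i) isT) => m _ Hm.
have hm := ltn_ord m.
have Hsum : \sum_(i < k) d i <= \sum_(i < k) \sum_(j < k) G i j.
  by apply: leq_sum => i _; apply: d_le.
have sG := sumG.
have Hlow : k * d m <= \sum_(i < k) d i.
  rewrite -[k in k * _]card_ord -sum_nat_const.
  by apply: leq_sum => i _; apply: Hm.
suff : d m <= #|out2N adj K (e m)|.
  move=> H; exists m => //.
  by case: (e_cases m) => [[E _]|[E _]]; rewrite /d E in H; [left|right].
case: (consec_e hm) => [[h1 [h2 h3]] | [h1 h2 h3 h4 [h5 h6]]].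
- apply: key => //; first by exists (a (nx m)); rewrite ?aP.
  have q2 : 2 <= #|[set w in P (nx m) | adj (e m) w]|.
    have hn := nx_lt m.
    case: (HP3 hn) => _ _ ac _ _.
    have <- : #|[set a (nx m); c (nx m)]| = 2 by rewrite cards2 ac.
    apply: subset_leq_card; apply/subsetP => w /set2P[] ->; rewrite inSep ?aP ?cP //.
  rewrite -/(d m).
  nia.
- apply: key => //; first by exists (b (nx m)); rewrite ?bP.
  have q1 : 1 <= #|[set w in P (nx m) | adj (e m) w]|.
    apply/card_gt0P; exists (b (nx m)); by rewrite inSep bP h1.
  have st := strict hm h3 h4 h1 h5 h6.
  have Hlow2 : k * d m < \sum_(i < k) d i.
    have hn := nx_lt m.
    rewrite (bigD1 (Ordinal hn)) //= -[k in k * _]card_ord -sum_nat_const (bigD1 (Ordinal hn)) //=.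
    rewrite -addSn leq_add //; apply: leq_sum => i _; exact: Hm.
  rewrite -/(d m).
  nia.
Qed.

End Global.

Theorem proposition4p11 (V : finType) (adj : rel V) :
  tournament_missing_disjoint_P2 adj ->
  forall (k : nat) (a b c : nat -> V),
    double_cycle adj k a b c ->
    exists2 s, s < k &
      (#|outN adj (KC k a b c) (a s)| <= #|out2N adj (KC k a b c) (a s)|) \/
      (#|outN adj (KC k a b c) (c s)| <= #|out2N adj (KC k a b c) (c s)|).
Proof.
move=> [Hor _] k a b c [Hk HP3 Hdist Hcyc].
exact: (main_glob Hor Hk HP3 Hdist Hcyc).
Qed.
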